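(* Consider a connected one-dimensional network of $m$ springs on $n$ nodes with kinematic matrix $D$ and $q$ displacement-controlled loadings with incidence matrix $R$ satisfying $\mathrm{rank}(R^\top D)=q$. Assume $q=n-2$ and that no spring is blocked by the displacement-controlled loadings. Then for every $x\in U\setminus\{0\}$, where $U=\{x\in D\mathbb{R}^n:R^\top x=0\}$, one has $x_i\neq0$ for all $i\in\{1,\dots,m\}$.
   Context: Spring $k$ joins left node $i_k$ to right node $j_k\neq i_k$; the graph is connected; $D$ is the $m\times n$ matrix with $(D\xi)_k=\xi_{j_k}-\xi_{i_k}$. Displacement-controlled loading $k$ prescribes $\xi_{J_k}-\xi_{I_k}=l_k(t)$; $R^k\in\{-1,0,1\}^m$ is the signed incidence vector of a chain of springs from $I_k$ to $J_k$, so $(R^k)^\top D\xi=\xi_{J_k}-\xi_{I_k}$; $R=(R^1,\dots,R^q)$. A spring $i$ is blocked by the displacement-controlled loadings if the family of pairs $\{I_k,J_k\}$, $k=1,\dots,q$, contains a chain connecting one endpoint of spring $i$ with its other endpoint. *)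

(* Defs.v *)
From mathcomp Require Import all_boot all_order all_algebra.
Set Implicit Arguments. Unset Strict Implicit. Unset Printing Implicit Defensive.
Import GRing.Theory Num.Theory.
Local Open Scope ring_scope.

(* Spring network: spring k : 'I_m joins left node [lft k] to right node [rgt k]. *)

Definition kinematic (R : nzRingType) (m n : nat) (lft rgt : 'I_m -> 'I_n)
  : 'M[R]_(m, n) :=
  \matrix_(k < m, v < n) ((v == rgt k)%:R - (v == lft k)%:R).

Definition spring_adj (m n : nat) (lft rgt : 'I_m -> 'I_n) : rel 'I_n :=
  fun x y => [exists k : 'I_m, ((lft k == x) && (rgt k == y))
                              || ((lft k == y) && (rgt k == x))].

Definition connected_network (m n : nat) (lft rgt : 'I_m -> 'I_n) : Prop :=
  forall x y : 'I_n, connect (spring_adj lft rgt) x y.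

(* A chain of springs, given as a sequence of (spring, orientation) pairs:
   orientation true = traversed from left node to right node,
   false = traversed from right node to left node. [chain_from a b c] says
   the chain c starts at node a and ends at node b. *)
Fixpoint chain_from (m n : nat) (lft rgt : 'I_m -> 'I_n) (a b : 'I_n)
    (c : seq ('I_m * bool)) : bool :=
  match c with
  | [::] => a == b
  | (s, d) :: c' =>
      (if d then lft s == a else rgt s == a)
      && chain_from lft rgt (if d then rgt s else lft s) b c'
  end.

Definition chain_incidence (R : nzRingType) (m : nat) (c : seq ('I_m * bool))
  : 'cV[R]_m :=
  \col_(k < m) (\sum_(p <- c | p.1 == k) (if p.2 then 1 else -1)).

Definition is_incidence_matrix (R : nzRingType) (m n q : nat)
    (lft rgt : 'I_m -> 'I_n) (I J : 'I_q -> 'I_n) (Rm : 'M[R]_(m, q)) : Prop :=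
  forall k : 'I_q, exists c : seq ('I_m * bool),
    [/\ chain_from lft rgt (I k) (J k) c, uniq (map fst c)
      & col k Rm = chain_incidence R c].

Definition loading_adj (n q : nat) (I J : 'I_q -> 'I_n) : rel 'I_n :=
  fun x y => [exists k : 'I_q, ((I k == x) && (J k == y))
                              || ((I k == y) && (J k == x))].

Definition blocked (m n q : nat) (lft rgt : 'I_m -> 'I_n) (I J : 'I_q -> 'I_n)
    (s : 'I_m) : bool :=
  connect (loading_adj I J) (lft s) (rgt s).

(* Main.v *)
Require Import Defs.
From mathcomp Require Import all_boot all_order all_algebra.
From mathcomp Require Import ring.
Import GRing.Theory Num.Theory.
Local Open Scope ring_scope.

Lemma tele (R : fieldType) (m n : nat) (lft rgt : 'I_m -> 'I_n) (f : 'I_n -> R)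
  (c : seq ('I_m * bool)) (a b : 'I_n) :
  chain_from lft rgt a b c ->
  \sum_i chain_incidence R c i 0 * (f (rgt i) - f (lft i)) = f b - f a.
Proof.
elim: c a => [|[s d] c IH] a /=.
  move/eqP->; rewrite subrr big1 // => i _; by rewrite mxE big_nil mul0r.
case/andP => Ha Hc.
have E: forall i, chain_incidence R ((s,d)::c) i 0 =
   (if s == i then (if d then 1 else -1) else 0) + chain_incidence R c i 0.
  by move=> i; rewrite /chain_incidence !mxE big_cons /=; case: (s == i); rewrite ?add0r.
under eq_bigr do rewrite E mulrDl.
rewrite big_split /= (IH _ Hc) (bigD1 s) //= eqxx big1 ?addr0; last first.
  by move=> i Hi; rewrite eq_sym (negbTE Hi) mul0r.
clear E; case: d Ha Hc => /eqP <- _; rewrite ?mul1r ?mulN1r.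
  by ring.
by ring.
Qed.

Lemma sum_delta (R : nzRingType) n (a : 'I_n) (F : 'I_n -> R) :
  \sum_y (y == a)%:R * F y = F a.
Proof.
rewrite (bigD1 a) //= eqxx mul1r big1 ?addr0 // => y Hy.
by rewrite (negbTE Hy) mul0r.
Qed.

Lemma KD (R : nzRingType) (m n p : nat) (lft rgt : 'I_m -> 'I_n) (B : 'M[R]_(n,p)) i j :
  (kinematic R lft rgt *m B) i j = B (rgt i) j - B (lft i) j.
Proof.
rewrite mxE.
under eq_bigr do rewrite mxE mulrBl.
by rewrite sumrB !sum_delta.
Qed.

Theorem lemma2 (R : realFieldType) (m n q : nat)
    (lft rgt : 'I_m -> 'I_n) (I J : 'I_q -> 'I_n) (Rm : 'M[R]_(m, q)) :
  (forall k : 'I_m, lft k != rgt k) ->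
  connected_network lft rgt ->
  is_incidence_matrix lft rgt I J Rm ->
  \rank (Rm^T *m kinematic R lft rgt) = q ->
  (q + 2 = n)%N ->
  (forall s : 'I_m, ~~ blocked lft rgt I J s) ->
  forall x : 'cV[R]_m,
    (exists xi : 'cV[R]_n, x = kinematic R lft rgt *m xi) ->
    Rm^T *m x = 0 ->
    x != 0 ->
    forall i : 'I_m, x i 0 != 0.
Proof.
move=> Hlr Hconn Hinc Hrank Hn Hnb x [xi ->] HRx Hx0 i.
set D := kinematic R lft rgt.
apply/negP => /eqP Hxi.
rewrite KD in Hxi.
have KR: forall (f : 'I_n -> R) k,
    \sum_j Rm j k * (f (rgt j) - f (lft j)) = f (J k) - f (I k).
  move=> f k; have [c [Hc _ Hcol]] := Hinc k.
  rewrite -(@tele _ _ _ _ _ f _ _ _ Hc); apply: eq_bigr => j _; by rewrite -Hcol mxE.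
have Hxi_eq: forall k, xi (J k) 0 = xi (I k) 0.
  move=> k; apply/eqP; rewrite -subr_eq0 -(KR (fun y => xi y 0)).
  have := congr1 (fun M : 'M[R]_(q,1) => M k 0) HRx; rewrite mxE [X in _ = X]mxE => E.
  apply/eqP; apply: (etrans _ E); apply: eq_bigr => j _; by rewrite mxE KD.
pose eta y : R := (connect (loading_adj I J) (lft i) y)%:R.
have symL: symmetric (loading_adj I J).
  by move=> a b; apply/existsP/existsP => -[k Hk]; exists k; rewrite orbC.
have Heta: forall k, eta (J k) = eta (I k).
  move=> k; rewrite /eta; congr ((nat_of_bool _)%:R).
  have e: loading_adj I J (I k) (J k) by apply/existsP; exists k; rewrite !eqxx.
  symmetry; exact: (same_connect1r (sym_connect_sym symL) e (lft i)).
pose S := \matrix_(r < 3, y < n)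
  (if (r : nat) == 0%N then 1 else if (r : nat) == 1%N then xi y 0 else eta y).
pose A := (Rm^T *m D)^T.
have SA: S *m A = 0.
  have ->: S *m A = (Rm^T *m (D *m S^T))^T by rewrite /A !trmx_mul !trmxK mulmxA.
  apply/eqP; rewrite trmx_eq0; apply/eqP/matrixP => k r.
  rewrite mxE [X in _ = X]mxE.
  under eq_bigr do rewrite mxE KD.
  rewrite (KR (fun y => S^T y r) k).
  rewrite !mxE; case: r => [[|[|[|]]] //= _]; first by rewrite subrr.
    by rewrite Hxi_eq subrr.
  by rewrite Heta subrr.
have rkS: (\rank S <= 2)%N.
  have: (S <= kermx A)%MS by apply/sub_kermxP.
  have E2: (n - q = 2)%N by rewrite -Hn addKn.
  by move/mxrankS; rewrite mxrank_ker mxrank_tr Hrank E2.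
have: ~~ row_free S by rewrite /row_free; apply: contraTN rkS => /eqP ->.
rewrite -kermx_eq0 => Hk.
have [r Hr]: exists r, row r (kermx S) != 0.
  apply/existsP; move: Hk; apply: contraR; rewrite negb_exists => /forallP H.
  apply/eqP/row_matrixP => r; rewrite row0; exact/eqP/negPn/H.
set u := row r (kermx S) in Hr.
have uS: u *m S = 0 by rewrite /u -row_mul mulmx_ker row0.
clearbody u.
set a := u 0 ord0; set b := u 0 (lift ord0 ord0);
set c := u 0 (lift ord0 (lift ord0 ord0)).
have key: forall y, a + (b * xi y 0 + c * eta y) = 0.
  move=> y; have := congr1 (fun M : 'M[R]_(1,n) => M 0 y) uS; rewrite !mxE.
  by rewrite !big_ord_recl big_ord0 /= !mxE /= mulr1 addr0.
have el: eta (lft i) = 1 by rewrite /eta connect0.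
have er: eta (rgt i) = 0.
  by have := Hnb i; rewrite /blocked /eta => /negbTE ->.
have hc: c = 0.
  have h1 := key (lft i); have h2 := key (rgt i).
  rewrite el in h1; rewrite er in h2.
  move/eqP: Hxi; rewrite subr_eq0 => /eqP Hx; rewrite Hx in h2.
  have ->: c = (a + (b * xi (lft i) 0 + c * 1)) - (a + (b * xi (lft i) 0 + c * 0)) by ring.
  by rewrite h1 h2 subrr.
have k' : forall y, a + b * xi y 0 = 0.
  by move=> y; have := key y; rewrite hc mul0r addr0.
have [j Hj] : exists j, (D *m xi) j 0 != 0.
  apply/existsP; move: Hx0; apply: contraR; rewrite negb_exists => /forallP H.
  apply/eqP/matrixP => j k; rewrite (ord1 k) [RHS]mxE; apply/eqP; exact: negPn (H j).
rewrite KD in Hj.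
have hb: b = 0.
  have: b * (xi (rgt j) 0 - xi (lft j) 0) = 0.
    have ->: b * (xi (rgt j) 0 - xi (lft j) 0) =
       (a + b * xi (rgt j) 0) - (a + b * xi (lft j) 0) by ring.
    by rewrite !k' subrr.
  by move/eqP; rewrite mulf_eq0 (negbTE Hj) orbF => /eqP.
have ha: a = 0 by have := k' (lft i); rewrite hb mul0r addr0.
move/negP: Hr; apply; apply/eqP/rowP => s; rewrite mxE.
case: s => [[|[|[|//]]] Hs]; [rewrite -[RHS]ha | rewrite -[RHS]hb | rewrite -[RHS]hc];
  by congr (u 0 _); apply: val_inj.
Qed.
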